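(* Let $(\Lambda,d)$ be a finitely aligned $k$-graph. Then $\Lambda$ satisfies condition (A) — for each $v\in\Lambda^0$ there exists $x\in\partial\Lambda$ with $r(x)=v$ such that for all $m,n\in\mathbb N^k$ with $m,n\le d(x)$, $\sigma^m x=\sigma^n x$ implies $m=n$ — if and only if the groupoid ${\mathcal G}_\Lambda|_{\partial\Lambda}$ is essentially free.
   Context: A $k$-graph $(\Lambda,d)$ is a countable small category $\Lambda$ (objects identified with identity morphisms) with a functor $d:\Lambda\to\mathbb N^k$ satisfying unique factorization: whenever $d(\lambda)=m+n$ there are unique $\mu,\nu$ with $d(\mu)=m$, $d(\nu)=n$, $\lambda=\mu\nu$. $\Lambda^0=d^{-1}(0)$, $r,s$ range/source, $v\Lambda=r^{-1}(v)$. $\Lambda^{\min}(\lambda,\mu)=\{(\alpha,\beta):\lambda\alpha=\mu\beta,\ d(\lambda\alpha)=d(\lambda)\vee d(\mu)\}$; finitely aligned means all are finite. $E\subseteq v\Lambda$ is exhaustive if every $\mu\in v\Lambda$ has some $\lambda\in E$ with $\Lambda^{\min}(\lambda,\mu)\ne\emptyset$; $v\mathrm{FE}(\Lambda)$ = finite exhaustive subsets. $S_\Lambda$: finite $F\subseteq\{(\lambda,\mu):s(\lambda)=s(\mu)\}$ with distinct $(\lambda,\mu),(\nu,\omega)\in F$ satisfying $\Lambda^{\min}(\lambda,\nu)=\Lambda^{\min}(\mu,\omega)=\emptyset$; inverse semigroup with $FG=\bigcup_{(\lambda,\mu)\in F,(\xi,\eta)\in G}\{(\lambda\alpha,\eta\beta):(\alpha,\beta)\in\Lambda^{\min}(\mu,\xi)\}$,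 $F^*=\{(\mu,\lambda):(\lambda,\mu)\in F\}$, idempotents $E(S_\Lambda)$. $\Omega_{k,m}$ ($m\in(\mathbb N\cup\{\infty\})^k$): objects $\{p\in\mathbb N^k:p\le m\}$, morphisms $(p,q)$, $p\le q\le m$, $r(p,q)=p$, $s(p,q)=q$, $d(p,q)=q-p$. $X_\Lambda$ = degree-preserving functors $x:\Omega_{k,m}\to\Lambda$, $d(x)=m$, $r(x)=x(0,0)$, $x(n)=x(n,n)$; $\sigma^m x:\Omega_{k,d(x)-m}\to\Lambda$, $(p,q)\mapsto x(p+m,q+m)$; $\lambda x$ ($s(\lambda)=x(0,0)$) has $(\lambda x)(0,n)=\lambda x(0,n-d(\lambda))$. $D_F=\{x:\exists(\lambda,\mu)\in F,\ x(0,d(\mu))=\mu\}$; $\theta_F(x)=\lambda\sigma^{d(\mu)}x$; $X_\Lambda$ has the topology with subbasis $\{D_F,X_\Lambda\setminus D_F\}$. ${\mathcal G}_\Lambda$: germs $[F,x]$ ($x\in D_F$) under $(F,x)\sim(G,y)$ iff $x=y$ and some $P\in E(S_\Lambda)$ has $x\in D_P$, $FP=GP$; product $[F,\theta_G(x)][G,x]=[FG,x]$, inverse $[F^*,\theta_F(x)]$, $r([F,x])=\theta_F(x)$, $s([F,x])=x$; unit space identified with $X_\Lambda$; topology with subbasis $\{\Psi(F),{\mathcal G}_\Lambda\setminus\Psi(F)\}$, $\Psi(F)=\{[F,x]:x\in D_F\}$. A boundary path is $x\in X_\Lambda$ such that for all $n\le d(x)$ and $E\in x(n)\mathrm{FE}(\Lambda)$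 some $\lambda\in E$ has $x(n,n+d(\lambda))=\lambda$; $\partial\Lambda$ = boundary paths (a closed invariant subset of the unit space). ${\mathcal G}_\Lambda|_{\partial\Lambda}=\{g:r(g),s(g)\in\partial\Lambda\}$ with the relative topology. A groupoid is essentially free if the set of units with trivial isotropy group is dense in the unit space. *)

(* Defs.v *)
From mathcomp Require Import all_boot.
From Stdlib Require Import List.

Set Implicit Arguments.
Unset Strict Implicit.
Unset Printing Implicit Defensive.

Definition Nk (k : nat) := {ffun 'I_k -> nat}.
(* None encodes infinity *)
Definition Ninf (k : nat) := {ffun 'I_k -> option nat}.

Definition zeroN k : Nk k := [ffun _ => 0].
Definition addN k (m n : Nk k) : Nk k := [ffun i => m i + n i].
(* truncated subtraction; only used when n <= m *)
Definition subN k (m n : Nk k) : Nk k := [ffun i => m i - n i].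
Definition joinN k (m n : Nk k) : Nk k := [ffun i => maxn (m i) (n i)].
Definition leN k (m n : Nk k) : bool := [forall i, m i <= n i].
Definition leNI k (p : Nk k) (m : Ninf k) : bool :=
  [forall i, if m i is Some a then p i <= a else true].
Definition addNI k (p : Nk k) (m : Ninf k) : Ninf k :=
  [ffun i => omap (addn (p i)) (m i)].
(* m - p, with oo - a = oo; only used when p <= m *)
Definition subIN k (m : Ninf k) (p : Nk k) : Ninf k :=
  [ffun i => omap (fun a => a - p i) (m i)].

(* k-graphs: countable small categories (objects = identity morphisms) *)
(* The composition kc is total; kc a b is meaningful when ks a = kr b. *)
Record kgraph (k : nat) : Type := KGraph {
  kmor :> Type;
  kr : kmor -> kmor;
  ks : kmor -> kmor;
  kc : kmor -> kmor -> kmor;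
  kd : kmor -> Nk k;
  kg_countable : exists f : kmor -> nat, injective f;
  kg_r_obj : forall a, kr (kr a) = kr a /\ ks (kr a) = kr a;
  kg_s_obj : forall a, ks (ks a) = ks a /\ kr (ks a) = ks a;
  kg_id_l : forall a, kc (kr a) a = a;
  kg_id_r : forall a, kc a (ks a) = a;
  kg_comp_r : forall a b, ks a = kr b -> kr (kc a b) = kr a;
  kg_comp_s : forall a b, ks a = kr b -> ks (kc a b) = ks b;
  kg_assoc : forall a b c, ks a = kr b -> ks b = kr c ->
               kc (kc a b) c = kc a (kc b c);
  kg_deg : forall a b, ks a = kr b -> kd (kc a b) = addN (kd a) (kd b);
  kg_fact : forall l (m n : Nk k), kd l = addN m n ->
     exists mu nu, [/\ kd mu = m, kd nu = n, ks mu = kr nu & l = kc mu nu] /\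
       forall mu' nu', kd mu' = m -> kd nu' = n -> ks mu' = kr nu' ->
         l = kc mu' nu' -> mu' = mu /\ nu' = nu
}.

Arguments kr {k L} _ : rename.
Arguments ks {k L} _ : rename.
Arguments kc {k L} _ _ : rename.
Arguments kd {k L} _ : rename.

Section KGraphDefs.
Variables (k : nat) (L : kgraph k).

Definition Lmin (lam mu : L) (ab : L * L) : Prop :=
  let (a, b) := ab in
  [/\ ks lam = kr a, ks mu = kr b, kc lam a = kc mu b &
      kd (kc lam a) = joinN (kd lam) (kd mu)].

Definition finitely_aligned : Prop :=
  forall lam mu : L, exists s : list (L * L),
    forall ab, Lmin lam mu ab -> List.In ab s.

Definition finite_exhaustive (v : L) (E : list L) : Prop :=
  (forall lam, List.In lam E -> kr lam = v) /\
  (forall mu : L, kr mu = v ->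
     exists lam, List.In lam E /\ exists ab, Lmin lam mu ab).

(* Paths: degree preserving functors Omega_{k,m} -> Lambda.            *)
(* pm p q is the image of the morphism (p,q); values outside p<=q<=m   *)
(* are irrelevant junk, so paths are compared with [peq].              *)
Record kpath := KPath { pd : Ninf k; pm : Nk k -> Nk k -> L }.

Definition is_path (x : kpath) : Prop :=
  (forall p q, leN p q -> leNI q (pd x) ->
     [/\ kd (pm x p q) = subN q p, kr (pm x p q) = pm x p p &
         ks (pm x p q) = pm x q q]) /\
  (forall p q r, leN p q -> leN q r -> leNI r (pd x) ->
     pm x p r = kc (pm x p q) (pm x q r)).

Definition peq (x y : kpath) : Prop :=
  pd x = pd y /\
  forall p q, leN p q -> leNI q (pd x) -> pm x p q = pm y p q.

Definition prange (x : kpath) : L := pm x (zeroN k) (zeroN k).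

Definition shift (m : Nk k) (x : kpath) : kpath :=
  KPath (subIN (pd x) m) (fun p q => pm x (addN p m) (addN q m)).

(* y = lam z : d(y) = d(lam) + d(z), and (lam z)(0,n) = lam z(0, n - d(lam))
   for d(lam) <= n <= d(y) (this determines the functor). *)
Definition concat (lam : L) (z y : kpath) : Prop :=
  [/\ ks lam = prange z, pd y = addNI (kd lam) (pd z) &
      forall n, leN (kd lam) n -> leNI n (pd y) ->
        pm y (zeroN k) n = kc lam (pm z (zeroN k) (subN n (kd lam)))].

(* The inverse semigroup S_Lambda (elements as finite sets of pairs)   *)
Definition pairset := L * L -> Prop.

Definition inS (F : pairset) : Prop :=
  [/\ exists s : list (L * L), forall ab, F ab -> List.In ab s,
      forall lam mu, F (lam, mu) -> ks lam = ks mu &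
      forall lam mu nu om, F (lam, mu) -> F (nu, om) -> (lam, mu) <> (nu, om) ->
        (forall ab, ~ Lmin lam nu ab) /\ (forall ab, ~ Lmin mu om ab)].

Definition prodS (F G : pairset) : pairset := fun ab =>
  exists lam mu xi eta a b,
    [/\ F (lam, mu), G (xi, eta), Lmin mu xi (a, b) &
        ab = (kc lam a, kc eta b)].

Definition idempotent (P : pairset) : Prop :=
  inS P /\ forall ab, prodS P P ab <-> P ab.

Definition inD (F : pairset) (x : kpath) : Prop :=
  exists lam mu, [/\ F (lam, mu), leNI (kd mu) (pd x) &
                     pm x (zeroN k) (kd mu) = mu].

Definition theta_rel (F : pairset) (x y : kpath) : Prop :=
  exists lam mu, [/\ F (lam, mu), leNI (kd mu) (pd x),
                     pm x (zeroN k) (kd mu) = mu &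
                     concat lam (shift (kd mu) x) y].

(* The groupoid of germs G_Lambda: germs [F,x] with F in S_Lambda,     *)
(* x in D_F, modulo (F,x) ~ (G,y) iff x = y and FP = GP for some       *)
(* idempotent P with x in D_P.                                         *)
Definition germ_eq (F : pairset) (x : kpath) (G : pairset) (y : kpath) : Prop :=
  peq x y /\ exists P, [/\ idempotent P, inD P x &
                           forall ab, prodS F P ab <-> prodS G P ab].

(* the isotropy group at x is trivial: every germ [F,x] with
   r([F,x]) = theta_F(x) = x  and s([F,x]) = x is a unit [P,x], P in E(S_Lambda) *)
Definition trivial_isotropy (x : kpath) : Prop :=
  forall F, inS F -> inD F x -> theta_rel F x x ->
    exists P, [/\ idempotent P, inD P x & germ_eq F x P x].

Definition is_boundary (x : kpath) : Prop :=
  is_path x /\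
  forall n, leNI n (pd x) -> forall E, finite_exhaustive (pm x n n) E ->
    exists lam, List.In lam E /\ leNI (addN n (kd lam)) (pd x) /\
                pm x n (addN n (kd lam)) = lam.

(* Topology on X_Lambda: subbasis {D_F, X \ D_F : F in S_Lambda}.      *)
Definition in_subbasic (B : pairset * bool) (x : kpath) : Prop :=
  if B.2 then inD B.1 x else ~ inD B.1 x.

Definition in_basic (Bs : list (pairset * bool)) (x : kpath) : Prop :=
  forall B, List.In B Bs -> in_subbasic B x.

Definition is_open (U : kpath -> Prop) : Prop :=
  forall x, is_path x -> U x ->
    exists Bs : list (pairset * bool),
      (forall B, List.In B Bs -> inS B.1) /\ in_basic Bs x /\
      forall y, is_path y -> in_basic Bs y -> U y.

(* G_Lambda|_{partial Lambda} is essentially free: the units with trivial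
   isotropy are dense in its unit space partial Lambda (relative topology),
   i.e. every nonempty relatively open subset of partial Lambda contains a
   unit with trivial isotropy. *)
Definition boundary_groupoid_essentially_free : Prop :=
  forall U, is_open U -> (exists x, is_boundary x /\ U x) ->
    exists x, [/\ is_boundary x, U x & trivial_isotropy x].

Definition conditionA : Prop :=
  forall v : L, kd v = zeroN k ->
    exists x, [/\ is_boundary x, prange x = v &
      forall m n : Nk k, leNI m (pd x) -> leNI n (pd x) ->
        peq (shift m x) (shift n x) -> m = n].

End KGraphDefs.

(* Main.v *)
From Stdlib Require Import ClassicalEpsilon Classical Cantor.
Require Import Defs.
From mathcomp Require Import all_boot zify.

Set Implicit Arguments.
Unset Strict Implicit.
Unset Printing Implicit Defensive.

Section NkLemmas.
Variable k : nat.
Implicit Types m n p q : Nk k.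

Lemma leNP m n : reflect (forall i, m i <= n i) (leN m n).
Proof. exact: forallP. Qed.

Definition ole (a : nat) (o : option nat) : bool :=
  if o is Some b then a <= b else true.

Lemma leNIP p (d : Ninf k) : reflect (forall i, ole (p i) (d i)) (leNI p d).
Proof. exact: forallP. Qed.

Lemma eqNP m n : (forall i, m i = n i) -> m = n.
Proof. by move=> H; apply/ffunP. Qed.

Lemma eqN_at m n : m = n -> forall i, m i = n i.
Proof. by move=> ->. Qed.

End NkLemmas.

Ltac nkE := rewrite /addN /subN /joinN /zeroN /addNI /subIN ?ffunE.

Ltac ptw :=
  repeat match goal with
  | H : is_true (leN _ _) |- _ => move/leNP in H
  | H : is_true (leNI _ _) |- _ => move/leNIP in H
  end.
Ltac nk0 := let i := fresh "i" in apply: eqNP => i; rewrite ?ffunE /=; lia.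

Section KG.
Variables (k : nat) (L : kgraph k).
Implicit Types (a b c l : L) (m n p q : Nk k).

Lemma addNC m n : addN m n = addN n m. Proof. nk0. Qed.
Lemma addNA m n p : addN m (addN n p) = addN (addN m n) p. Proof. nk0. Qed.
Lemma addN0 m : addN m (zeroN k) = m. Proof. nk0. Qed.
Lemma add0N m : addN (zeroN k) m = m. Proof. nk0. Qed.
Lemma addNKl m n : subN (addN m n) m = n. Proof. nk0. Qed.
Lemma subNK m n : leN m n -> addN m (subN n m) = n.
Proof. move=> /leNP H; apply: eqNP => i; rewrite !ffunE; have := H i; lia. Qed.
Lemma subNn m : subN m m = zeroN k. Proof. nk0. Qed.
Lemma subN0 m : subN m (zeroN k) = m. Proof. nk0. Qed.
Lemma leNn m : leN m m. Proof. by apply/leNP. Qed.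
Lemma le0N m : leN (zeroN k) m. Proof. by apply/leNP => i; rewrite ffunE. Qed.
Lemma leN_trans m n p : leN m n -> leN n p -> leN m p.
Proof. move=> /leNP H1 /leNP H2; apply/leNP => i; exact: leq_trans (H1 i) (H2 i). Qed.
Lemma leN_addr m n : leN m (addN m n). Proof. apply/leNP => i; rewrite ffunE; lia. Qed.
Lemma leN_addl m n : leN n (addN m n). Proof. apply/leNP => i; rewrite ffunE; lia. Qed.
Lemma leN_joinl m n : leN m (joinN m n). Proof. apply/leNP => i; rewrite ffunE; lia. Qed.
Lemma leN_joinr m n : leN n (joinN m n). Proof. apply/leNP => i; rewrite ffunE; lia. Qed.
Lemma leN_anti m n : leN m n -> leN n m -> m = n.
Proof. move=> /leNP H1 /leNP H2; apply: eqNP => i; have := H1 i; have := H2 i; lia. Qed.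
Lemma addN_cancel_l m n n' : addN m n = addN m n' -> n = n'.
Proof. move=> H; apply: eqNP => i; have := eqN_at H i; rewrite !ffunE; lia. Qed.
Lemma addN_cancel_r m n n' : addN n m = addN n' m -> n = n'.
Proof. move=> H; apply: eqNP => i; have := eqN_at H i; rewrite !ffunE; lia. Qed.
Lemma addN_eq0 m n : addN m n = m -> n = zeroN k.
Proof. move=> H; apply: eqNP => i; have := eqN_at H i; rewrite !ffunE; lia. Qed.
Lemma addN_eq0' m n : addN n m = m -> n = zeroN k.
Proof. move=> H; apply: eqNP => i; have := eqN_at H i; rewrite !ffunE; lia. Qed.
Lemma leN_add2l m n p : leN n p -> leN (addN m n) (addN m p).
Proof. move=> /leNP H; apply/leNP => i; rewrite !ffunE; have := H i; lia. Qed.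
Lemma leN_subLR m n p : leN m n -> leN n (addN m p) -> leN (subN n m) p.
Proof. move=> /leNP H1 /leNP H2; apply/leNP => i; rewrite !ffunE; have := H1 i; have := H2 i; rewrite !ffunE; lia. Qed.
Lemma join_le m n p : leN m p -> leN n p -> leN (joinN m n) p.
Proof. move=> /leNP H1 /leNP H2; apply/leNP => i; rewrite !ffunE; have := H1 i; have := H2 i; lia. Qed.
Lemma leN_sub2r m n p : leN n p -> leN (subN n m) (subN p m).
Proof. move=> /leNP H; apply/leNP => i; rewrite !ffunE; have := H i; lia. Qed.

Lemma kd_kr a : kd (kr a) = zeroN k.
Proof.
have H := kg_deg (proj2 (kg_r_obj a)); rewrite kg_id_l in H.
apply: (@addN_eq0' (kd a)); by rewrite -H.
Qed.

Lemma kd_ks a : kd (ks a) = zeroN k.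
Proof.
have H : ks a = kr (ks a) by rewrite (proj2 (kg_s_obj a)).
have H2 := kg_deg H; rewrite kg_id_r in H2.
apply: (@addN_eq0 (kd a)); by rewrite -H2.
Qed.

Lemma fact_uniq a b a' b' : ks a = kr b -> ks a' = kr b' -> kc a b = kc a' b' ->
  kd a = kd a' -> a = a' /\ b = b'.
Proof.
move=> Hab Hab' E Ed.
have Hd := kg_deg Hab.
have Hd' := kg_deg Hab'.
have Edb : kd b' = kd b.
  by apply: (@addN_cancel_l (kd a)); rewrite -Hd Ed -Hd' E.
have [mu [nu [[H1 H2 H3 H4] Hu]]] := kg_fact Hd.
have [e1 e2] := Hu a b erefl erefl Hab erefl.
have [e3 e4] := Hu a' b' (esym Ed) Edb Hab' E.
by split; congruence.
Qed.

Lemma deg0 a : kd a = zeroN k -> kr a = a /\ ks a = a.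
Proof.
move=> H.
have H1 : kc (kr a) a = kc a (ks a) by rewrite kg_id_l kg_id_r.
have [] := fact_uniq (proj2 (kg_r_obj a)) (esym (proj2 (kg_s_obj a))) H1 _.
  by rewrite kd_kr H.
by move=> -> <-.
Qed.

Lemma kr_kr a : kr (kr a) = kr a. Proof. exact: (proj1 (kg_r_obj a)). Qed.
Lemma ks_kr a : ks (kr a) = kr a. Proof. exact: (proj2 (kg_r_obj a)). Qed.
Lemma ks_ks a : ks (ks a) = ks a. Proof. exact: (proj1 (kg_s_obj a)). Qed.
Lemma kr_ks a : kr (ks a) = ks a. Proof. exact: (proj2 (kg_s_obj a)). Qed.

Lemma comp_deg0 a b : ks a = kr b -> kd b = zeroN k -> kc a b = a.
Proof. move=> H Hb; have [Hr _] := deg0 Hb; by rewrite -Hr -H kg_id_r. Qed.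

Lemma comp_self a b : ks a = kr b -> kc a b = a -> kd b = zeroN k.
Proof. move=> H E; have := kg_deg H; rewrite E => /esym; exact: addN_eq0. Qed.

End KG.

Section Fact.
Variables (k : nat) (L : kgraph k).
Implicit Types (a b c l w : L) (m n p q r : Nk k).

Definition spl l m : L * L :=
  epsilon (inhabits (l, l)) (fun pr => [/\ kd pr.1 = m, kd pr.2 = subN (kd l) m,
     ks pr.1 = kr pr.2 & l = kc pr.1 pr.2]).
Definition pre l m := (spl l m).1.
Definition suf l m := (spl l m).2.
Definition seg l p q := suf (pre l q) p.

Lemma splP l m : leN m (kd l) ->
  [/\ kd (pre l m) = m, kd (suf l m) = subN (kd l) m,
     ks (pre l m) = kr (suf l m) & l = kc (pre l m) (suf l m)].
Proof.
move=> H; rewrite /pre /suf /spl.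
match goal with |- context [epsilon ?i ?P] => suff: exists x, P x by move/(epsilon_spec i) end.
have Hd : kd l = addN m (subN (kd l) m) by rewrite subNK.
have [mu [nu [[H1 H2 H3 H4] _]]] := kg_fact Hd.
by exists (mu, nu).
Qed.

Lemma pre_deg l m : leN m (kd l) -> kd (pre l m) = m.
Proof. by case/splP. Qed.
Lemma suf_deg l m : leN m (kd l) -> kd (suf l m) = subN (kd l) m.
Proof. by case/splP. Qed.
Lemma pre_suf_c l m : leN m (kd l) -> ks (pre l m) = kr (suf l m).
Proof. by case/splP. Qed.
Lemma pre_suf l m : leN m (kd l) -> l = kc (pre l m) (suf l m).
Proof. by case/splP. Qed.

Lemma deg_comp a b : ks a = kr b -> kd (kc a b) = addN (kd a) (kd b).
Proof. exact: kg_deg. Qed.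

Lemma le_comp a b : ks a = kr b -> leN (kd a) (kd (kc a b)).
Proof. move=> H; rewrite deg_comp //; exact: leN_addr. Qed.

Lemma pre_uniq a b : ks a = kr b -> pre (kc a b) (kd a) = a /\ suf (kc a b) (kd a) = b.
Proof.
move=> H; have Hl := le_comp H.
have [H1 H2 H3 H4] := splP Hl.
have [E1 E2] := fact_uniq H3 H (esym H4) H1; by rewrite E1 E2.
Qed.

Lemma pre_c a b : ks a = kr b -> pre (kc a b) (kd a) = a.
Proof. by case/pre_uniq. Qed.
Lemma suf_c a b : ks a = kr b -> suf (kc a b) (kd a) = b.
Proof. by case/pre_uniq. Qed.

Lemma kr_pre l m : leN m (kd l) -> kr (pre l m) = kr l.
Proof. move=> H; by rewrite {2}(pre_suf H) kg_comp_r // pre_suf_c. Qed.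
Lemma ks_suf l m : leN m (kd l) -> ks (suf l m) = ks l.
Proof. move=> H; by rewrite {2}(pre_suf H) kg_comp_s // pre_suf_c. Qed.

Lemma pre_full l : pre l (kd l) = l.
Proof. have H := pre_c (esym (kr_ks l)); by rewrite kg_id_r in H. Qed.
Lemma suf_full l : suf l (kd l) = ks l.
Proof. have H := suf_c (esym (kr_ks l)); by rewrite kg_id_r in H. Qed.
Lemma pre_fullE l m : kd l = m -> pre l m = l.
Proof. by move=> <-; exact: pre_full. Qed.
Lemma suf_fullE l m : kd l = m -> suf l m = ks l.
Proof. by move=> <-; exact: suf_full. Qed.
Lemma pre0 l : pre l (zeroN k) = kr l.
Proof. have H := pre_c (ks_kr l); by rewrite kg_id_l kd_kr in H. Qed.
Lemma suf0 l : suf l (zeroN k) = l.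
Proof. have H := suf_c (ks_kr l); by rewrite kg_id_l kd_kr in H. Qed.

Lemma pre_comp_l a b n : ks a = kr b -> leN n (kd a) -> pre (kc a b) n = pre a n.
Proof.
move=> H Hn.
have E : kc a b = kc (pre a n) (kc (suf a n) b).
  by rewrite -kg_assoc ?pre_suf_c // -?pre_suf // ks_suf.
have Hc : ks (pre a n) = kr (kc (suf a n) b).
  by rewrite pre_suf_c // kg_comp_r // ks_suf.
by have := pre_c Hc; rewrite (pre_deg Hn) -E.
Qed.

Lemma suf_comp a b n : ks a = kr b -> leN n (kd a) -> suf (kc a b) n = kc (suf a n) b.
Proof.
move=> H Hn.
have E : kc a b = kc (pre a n) (kc (suf a n) b).
  by rewrite -kg_assoc ?pre_suf_c // -?pre_suf // ks_suf.
have Hc : ks (pre a n) = kr (kc (suf a n) b).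
  by rewrite pre_suf_c // kg_comp_r // ks_suf.
by have := suf_c Hc; rewrite (pre_deg Hn) -E.
Qed.

Lemma pre_comp_r a b n : ks a = kr b -> leN n (kd b) ->
  pre (kc a b) (addN (kd a) n) = kc a (pre b n).
Proof.
move=> H Hn.
have H' : ks a = kr (pre b n) by rewrite kr_pre.
have E : kc a b = kc (kc a (pre b n)) (suf b n).
  by rewrite kg_assoc ?pre_suf_c // -?pre_suf.
have Hc : ks (kc a (pre b n)) = kr (suf b n).
  by rewrite kg_comp_s // pre_suf_c.
by have := pre_c Hc; rewrite deg_comp // (pre_deg Hn) -E.
Qed.

Lemma pre_pre l p q : leN p q -> leN q (kd l) -> pre (pre l q) p = pre l p.
Proof.
move=> Hpq Hq.
rewrite {2}(pre_suf Hq) pre_comp_l ?pre_suf_c //.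
by rewrite pre_deg.
Qed.

Lemma suf_split w p q : leN p q -> leN q (kd w) ->
  suf w p = kc (suf (pre w q) p) (suf w q).
Proof.
move=> Hpq Hq.
have Hp' : leN p (kd (pre w q)) by rewrite pre_deg.
rewrite {1}(pre_suf Hq) suf_comp ?pre_suf_c //.
Qed.

Lemma seg_deg l p q : leN p q -> leN q (kd l) -> kd (seg l p q) = subN q p.
Proof. move=> H1 H2; rewrite /seg suf_deg pre_deg //. Qed.

Lemma seg_pre l p q : leN p q -> leN q (kd l) -> seg l p q = pre (suf l p) (subN q p).
Proof.
move=> H1 H2.
have Hp : leN p (kd l) by exact: leN_trans H2.
have Hp' : leN p (kd (pre l q)) by rewrite pre_deg.
rewrite (suf_split H1 H2) -(seg_deg H1 H2) pre_c //.
by rewrite /seg ks_suf // pre_suf_c.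
Qed.

Lemma seg_comp l p q r : leN p q -> leN q r -> leN r (kd l) ->
  kc (seg l p q) (seg l q r) = seg l p r.
Proof.
move=> H1 H2 H3.
have Hr : leN r (kd (pre l r)) by rewrite pre_deg // leNn.
rewrite /seg -(pre_pre H2 H3) -suf_split //.
by rewrite pre_deg.
Qed.

Lemma seg_r l p q : leN p q -> leN q (kd l) -> kr (seg l p q) = seg l p p.
Proof.
move=> H1 H2.
have Hp : leN p (kd l) by exact: leN_trans H2.
have Hp' : leN p (kd (pre l q)) by rewrite pre_deg.
rewrite /seg -pre_suf_c // pre_pre //.
have Hpp : kd (pre l p) = p by rewrite pre_deg.
by rewrite -{3}Hpp suf_full.
Qed.

Lemma seg_s l p q : leN p q -> leN q (kd l) -> ks (seg l p q) = seg l q q.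
Proof.
move=> H1 H2.
have Hp' : leN p (kd (pre l q)) by rewrite pre_deg.
rewrite /seg ks_suf //.
have Hqq : kd (pre l q) = q by rewrite pre_deg.
by rewrite -{3}Hqq suf_full.
Qed.

Lemma seg0 l q : seg l (zeroN k) q = pre l q.
Proof. by rewrite /seg suf0. Qed.

Lemma lmin_deg a b c d : Lmin a b (c, d) ->
  addN (kd a) (kd c) = joinN (kd a) (kd b) /\ addN (kd b) (kd d) = joinN (kd a) (kd b).
Proof.
case=> H1 H2 H3 H4; split; first by rewrite -deg_comp.
by rewrite -deg_comp // -H3.
Qed.

Lemma common_lmin a b c d : ks a = kr c -> ks b = kr d -> kc a c = kc b d ->
  exists ab, Lmin a b ab.
Proof.
move=> Hac Hbd E.
set w := kc a c.
have Ha : leN (kd a) (kd w) by exact: le_comp.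
have Hb : leN (kd b) (kd w) by rewrite /w E; exact: le_comp.
set m := joinN (kd a) (kd b).
have Hm : leN m (kd w) by exact: join_le.
set p := pre w m.
have Hpa : pre p (kd a) = a by rewrite /p pre_pre ?leN_joinl // /w pre_c.
have Hpb : pre p (kd b) = b by rewrite /p pre_pre ?leN_joinr // /w E pre_c.
have Hdp : kd p = m by rewrite pre_deg.
have Ha' : leN (kd a) (kd p) by rewrite Hdp leN_joinl.
have Hb' : leN (kd b) (kd p) by rewrite Hdp leN_joinr.
exists (suf p (kd a), suf p (kd b)); split.
- by rewrite -{1}Hpa pre_suf_c.
- by rewrite -{1}Hpb pre_suf_c.
- by rewrite -{1}Hpa -pre_suf // -{1}Hpb -pre_suf.
- by rewrite -{1}Hpa -pre_suf.
Qed.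

End Fact.

Section Paths.
Variables (k : nat) (L : kgraph k).
Implicit Types (a b c l w : L) (m n p q r : Nk k) (d : Ninf k) (x y z : kpath L).

Notation "0" := (zeroN k).

Lemma leNI_trans p q d : leN p q -> leNI q d -> leNI p d.
Proof.
move=> /leNP H1 /leNIP H2; apply/leNIP => i; have := H1 i; have := H2 i.
by case: (d i) => //= a; lia.
Qed.

Lemma leNI0 d : leNI 0 d.
Proof. by apply/leNIP => i; rewrite ffunE; case: (d i). Qed.

Lemma leNI_join p q d : leNI p d -> leNI q d -> leNI (joinN p q) d.
Proof.
move=> /leNIP H1 /leNIP H2; apply/leNIP => i; have := H1 i; have := H2 i; rewrite ffunE.
by case: (d i) => //= a; lia.
Qed.

Lemma path_deg x p q : is_path x -> leN p q -> leNI q (pd x) -> kd (pm x p q) = subN q p.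
Proof. by case=> H _ Hpq Hq; case: (H p q Hpq Hq). Qed.
Lemma path_r x p q : is_path x -> leN p q -> leNI q (pd x) -> kr (pm x p q) = pm x p p.
Proof. by case=> H _ Hpq Hq; case: (H p q Hpq Hq). Qed.
Lemma path_s x p q : is_path x -> leN p q -> leNI q (pd x) -> ks (pm x p q) = pm x q q.
Proof. by case=> H _ Hpq Hq; case: (H p q Hpq Hq). Qed.
Lemma path_comp x p q r : is_path x -> leN p q -> leN q r -> leNI r (pd x) ->
  pm x p r = kc (pm x p q) (pm x q r).
Proof. by case=> _ H; apply: H. Qed.

Lemma path_deg0 x q : is_path x -> leNI q (pd x) -> kd (pm x 0 q) = q.
Proof. by move=> Hx Hq; rewrite path_deg ?le0N // subN0. Qed.

Lemma path_cc x p q r : is_path x -> leN p q -> leN q r -> leNI r (pd x) ->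
  ks (pm x p q) = kr (pm x q r).
Proof.
move=> Hx H1 H2 H3; have Hq := leNI_trans H2 H3.
by rewrite path_s // path_r.
Qed.

Lemma path_seg x p q : is_path x -> leN p q -> leNI q (pd x) ->
  pm x p q = seg (pm x 0 q) p q.
Proof.
move=> Hx Hpq Hq.
rewrite /seg (pre_fullE (path_deg0 Hx Hq)).
rewrite (path_comp Hx (le0N p) Hpq Hq).
have Hp := leNI_trans Hpq Hq.
have := suf_c (path_cc Hx (le0N p) Hpq Hq).
by rewrite path_deg0.
Qed.

Lemma path_pre x p q : is_path x -> leN p q -> leNI q (pd x) ->
  pre (pm x 0 q) p = pm x 0 p.
Proof.
move=> Hx Hpq Hq.
rewrite (path_comp Hx (le0N p) Hpq Hq).
have Hp := leNI_trans Hpq Hq.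
have := pre_c (path_cc Hx (le0N p) Hpq Hq).
by rewrite path_deg0.
Qed.

Lemma peq_init x y : is_path x -> is_path y -> pd x = pd y ->
  (forall n, leNI n (pd x) -> pm x 0 n = pm y 0 n) -> peq x y.
Proof.
move=> Hx Hy Hd H; split => // p q Hpq Hq.
rewrite path_seg // (path_seg Hy Hpq) ?H //; by rewrite -Hd.
Qed.

Lemma peq_refl x : peq x x.
Proof. by split. Qed.
Lemma peq_sym x y : peq x y -> peq y x.
Proof. case=> Hd H; split=> // p q Hpq Hq; rewrite H //; by rewrite Hd. Qed.
Lemma peq_trans x y z : peq x y -> peq y z -> peq x z.
Proof.
case=> Hd H [Hd' H']; split; first by rewrite Hd.
move=> p q Hpq Hq; rewrite H // H' //; by rewrite -Hd.
Qed.

Section MkPath.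
Variables (P : Nk k -> L) (D : Ninf k).
Hypothesis HP1 : forall n, leNI n D -> kd (P n) = n.
Hypothesis HP2 : forall n m, leN n m -> leNI m D -> pre (P m) n = P n.

Definition mkpath := KPath D (fun p q => seg (P q) p q).

Lemma mkpath_path : is_path mkpath.
Proof.
split.
- move=> p q Hpq Hq /=.
  have Hq' : leN q (kd (P q)) by rewrite HP1 // leNn.
  have Hp := leNI_trans Hpq Hq.
  split; first by rewrite seg_deg.
  + by rewrite seg_r // /seg !HP2 ?leNn.
  + by rewrite seg_s ?leNn.
- move=> p q r Hpq Hqr Hr /=.
  have Hr' : leN r (kd (P r)) by rewrite HP1 // leNn.
  have Hq := leNI_trans Hqr Hr.
  rewrite -(seg_comp Hpq Hqr Hr'); congr kc.
  by rewrite /seg !HP2 ?leNn.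
Qed.

Lemma mkpath_0 n : leNI n D -> pm mkpath 0 n = P n.
Proof.
move=> Hn /=; rewrite seg0.
by by rewrite pre_fullE // HP1.
Qed.

End MkPath.

End Paths.

Section Shift.
Variables (k : nat) (L : kgraph k).
Implicit Types (a b c l w lam : L) (m n p q r s : Nk k) (d : Ninf k) (x y z : kpath L).

Notation "0" := (zeroN k).

Lemma leNI_shift m q d : leNI m d -> leNI q (subIN d m) = leNI (addN q m) d.
Proof.
move=> /leNIP H; apply/leNIP/leNIP => H2 i; have := H i; have := H2 i;
  rewrite !ffunE; case: (d i) => //= a; lia.
Qed.

Lemma leNI_shiftW m q d : leNI (addN q m) d -> leNI q (subIN d m).
Proof.
move=> /leNIP H; apply/leNIP => i; have := H i; rewrite !ffunE; case: (d i) => //= a; lia.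
Qed.

Lemma leNI_addm q m d : leNI (addN q m) d -> leNI m d.
Proof. apply: leNI_trans; exact: leN_addl. Qed.

Lemma shift_path x m : is_path x -> leNI m (pd x) -> is_path (shift m x).
Proof.
move=> Hx Hm; split.
- move=> p q Hpq /=; rewrite leNI_shift // => Hq.
  have Hpq' : leN (addN p m) (addN q m) by rewrite !(addNC _ m); exact: leN_add2l.
  have Hp' := leNI_trans Hpq' Hq.
  split; [|exact: path_r|exact: path_s].
  rewrite path_deg //; apply: eqNP => i; rewrite !ffunE; lia.
- move=> p q r Hpq Hqr /=; rewrite leNI_shift // => Hr.
  apply: path_comp => //; by rewrite !(addNC _ m); exact: leN_add2l.
Qed.

Lemma prange_shift x m : prange (shift m x) = pm x m m.
Proof. by rewrite /prange /= add0N. Qed.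

Lemma shift_shift x (a b : Nk k) : peq (shift a (shift b x)) (shift (addN a b) x).
Proof.
split.
- rewrite /=; apply/ffunP => i; rewrite !ffunE; case: (pd x i) => //= c.
  congr Some; lia.
- move=> p q _ _ /=; by rewrite -!addNA.
Qed.

Lemma peq_shift x y s : leNI s (pd x) -> peq x y -> peq (shift s x) (shift s y).
Proof.
move=> Hs [Hd H]; split; first by rewrite /= Hd.
move=> p q Hpq /=; rewrite leNI_shift // => Hq; apply: H => //.
by rewrite !(addNC _ s); exact: leN_add2l.
Qed.

Lemma shift_pm0 x m n : pm (shift m x) 0 n = pm x m (addN n m).
Proof. by rewrite /= add0N. Qed.

Definition catT lam n := subN (joinN n (kd lam)) (kd lam).
Definition catW lam z n := kc lam (pm z 0 (catT lam n)).
Definition catP lam z n := pre (catW lam z n) n.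
Definition cat lam z := mkpath (catP lam z) (addNI (kd lam) (pd z)).

Section Cat.
Variables (lam : L) (z : kpath L).
Hypothesis Hz : is_path z.
Hypothesis Hlz : ks lam = prange z.

Lemma catT_le n : leNI n (addNI (kd lam) (pd z)) -> leNI (catT lam n) (pd z).
Proof.
move=> /leNIP H; apply/leNIP => i; have := H i; rewrite !ffunE.
by case: (pd z i) => //= a; lia.
Qed.

Lemma catW_c n : leNI n (addNI (kd lam) (pd z)) -> ks lam = kr (pm z 0 (catT lam n)).
Proof. move=> H; by rewrite Hlz path_r ?le0N ?catT_le. Qed.

Lemma catW_deg n : leNI n (addNI (kd lam) (pd z)) -> kd (catW lam z n) = joinN n (kd lam).
Proof.
move=> H; rewrite /catW deg_comp; last exact: catW_c.
rewrite path_deg0 ?catT_le //.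
rewrite subNK //; exact: leN_joinr.
Qed.

Lemma catP_deg n : leNI n (addNI (kd lam) (pd z)) -> kd (catP lam z n) = n.
Proof. move=> H; rewrite /catP pre_deg // catW_deg //; exact: leN_joinl. Qed.

Lemma catT_mono n m : leN n m -> leN (catT lam n) (catT lam m).
Proof. move=> /leNP H; apply/leNP => i; rewrite !ffunE; have := H i; lia. Qed.

Lemma catW_pre n m : leN n m -> leNI m (addNI (kd lam) (pd z)) ->
  pre (catW lam z m) (joinN n (kd lam)) = catW lam z n.
Proof.
move=> Hnm Hm.
have Hn := leNI_trans Hnm Hm.
have E : joinN n (kd lam) = addN (kd lam) (catT lam n).
  by rewrite subNK // leN_joinr.
rewrite E /catW pre_comp_r; first last.
- by rewrite path_deg0 ?catT_le // catT_mono.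
- exact: catW_c.
by rewrite path_pre // ?catT_le // catT_mono.
Qed.

Lemma catP_pre n m : leN n m -> leNI m (addNI (kd lam) (pd z)) ->
  pre (catP lam z m) n = catP lam z n.
Proof.
move=> Hnm Hm.
have Hn := leNI_trans Hnm Hm.
have Hjm : leN (joinN n (kd lam)) (kd (catW lam z m)).
  rewrite catW_deg //; apply: join_le; [exact: leN_trans Hnm (leN_joinl _ _)|exact: leN_joinr].
rewrite /catP pre_pre //; last by rewrite catW_deg // leN_joinl.
rewrite -(catW_pre Hnm Hm) pre_pre //; exact: leN_joinl.
Qed.

Lemma cat_path : is_path (cat lam z).
Proof. apply: mkpath_path; [exact: catP_deg|exact: catP_pre]. Qed.

Lemma cat_pd : pd (cat lam z) = addNI (kd lam) (pd z).
Proof. by []. Qed.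

Lemma cat_concat : concat lam z (cat lam z).
Proof.
split => // n Hn Hn'.
rewrite /cat (mkpath_0 catP_deg Hn').
have Ej : joinN n (kd lam) = n by apply: leN_anti; [apply: join_le => //; exact: leNn|exact: leN_joinl].
rewrite /catP pre_fullE; last by rewrite catW_deg // Ej.
by rewrite /catW /catT Ej.
Qed.

End Cat.

Definition ext x mu := leNI (kd mu) (pd x) /\ pm x 0 (kd mu) = mu.

Lemma concat_ext lam z y : is_path z -> concat lam z y -> ext y lam.
Proof.
move=> Hz [H1 H2 H3].
have Hl : leNI (kd lam) (pd y).
  rewrite H2; apply/leNIP => i; rewrite ffunE; case: (pd z i) => //= a; lia.
split => //; rewrite H3 ?leNn // subNn.
by rewrite -/(prange z) -H1 kg_id_r.
Qed.

Lemma concat_shift lam z y : is_path z -> is_path y -> concat lam z y ->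
  peq (shift (kd lam) y) z.
Proof.
move=> Hz Hy Hc.
have [Hl _] := concat_ext Hz Hc.
case: Hc => H1 H2 H3.
have Hpd : subIN (pd y) (kd lam) = pd z.
  rewrite H2; apply/ffunP => i; rewrite !ffunE; case: (pd z i) => //= a; congr Some; lia.
apply: peq_init => //; first exact: shift_path.
move=> n Hn; rewrite shift_pm0.
have Hn' : leNI (addN n (kd lam)) (pd y) by rewrite -leNI_shift.
have Hle : leN (kd lam) (addN n (kd lam)) by exact: leN_addl.
rewrite path_seg // H3 //.
have Esub : subN (addN n (kd lam)) (kd lam) = n by rewrite addNC addNKl.
rewrite Esub.
have Hn2 : leNI n (pd z) by move: Hn; rewrite /= Hpd.
have Hc : ks lam = kr (pm z 0 n) by rewrite H1 path_r ?le0N.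
have Hdw : kd (kc lam (pm z 0 n)) = addN n (kd lam) by rewrite deg_comp // path_deg0 // addNC.
rewrite seg_pre ?Hdw ?leNn // suf_c // Esub pre_fullE //; exact: path_deg0.
Qed.

End Shift.

Section Bdry.
Variables (k : nat) (L : kgraph k).
Implicit Types (a b c l w lam : L) (m n p q r : Nk k) (x y z : kpath L).

Notation "0" := (zeroN k).

Definition cfilter {A : Type} (P : A -> Prop) (s : list A) :=
  List.filter (fun a0 : A => if excluded_middle_informative (P a0) then true else false) s.

Lemma in_cfilter {A : Type} (P : A -> Prop) (s0 : list A) (a0 : A) : List.In a0 (cfilter P s0) <-> List.In a0 s0 /\ P a0.
Proof.
rewrite /cfilter List.filter_In; case: excluded_middle_informative => H; split; case=> //.
Qed.

Definition fa a b : list (L * L) :=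
  epsilon (inhabits nil) (fun s0 : list (L * L) => forall ab, Lmin a b ab -> List.In ab s0).

Lemma fa_spec a b ab : finitely_aligned L -> Lmin a b ab -> List.In ab (fa a b).
Proof.
move=> FA; move: ab; rewrite /fa.
match goal with |- context [epsilon ?i ?P] => suff: exists t0 : list (L * L), P t0 by move/(epsilon_spec i) end.
exact: FA.
Qed.

Lemma common_lmin2 a b c d' : ks a = kr c -> ks b = kr d' -> kc a c = kc b d' ->
  exists c1 d1 e, [/\ Lmin a b (c1, d1), ks d1 = kr e & d' = kc d1 e].
Proof.
move=> Hac Hbd E.
set w := kc a c.
have Ha : leN (kd a) (kd w) by exact: le_comp.
have Hb : leN (kd b) (kd w) by rewrite /w E; exact: le_comp.
set m := joinN (kd a) (kd b).
have Hm : leN m (kd w) by exact: join_le.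
set p := pre w m.
have Hpa : pre p (kd a) = a by rewrite /p pre_pre ?leN_joinl // /w pre_c.
have Hpb : pre p (kd b) = b by rewrite /p pre_pre ?leN_joinr // /w E pre_c.
have Hdp : kd p = m by rewrite pre_deg.
have Ha' : leN (kd a) (kd p) by rewrite Hdp leN_joinl.
have Hb' : leN (kd b) (kd p) by rewrite Hdp leN_joinr.
exists (suf p (kd a)), (suf p (kd b)), (suf w m); split.
- split.
  + by rewrite -{1}Hpa pre_suf_c.
  + by rewrite -{1}Hpb pre_suf_c.
  + by rewrite -{1}Hpa -pre_suf // -{1}Hpb -pre_suf.
  + by rewrite -{1}Hpa -pre_suf.
- by rewrite ks_suf // /p pre_suf_c.
- have -> : d' = suf w (kd b) by rewrite /w E suf_c.
  rewrite (suf_split (leN_joinr _ _) Hm) //.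
Qed.

Lemma path_pre_gen x p q r : is_path x -> leN p q -> leN q r -> leNI r (pd x) ->
  pre (pm x p r) (subN q p) = pm x p q.
Proof.
move=> Hx H1 H2 H3.
rewrite (path_comp Hx H1 H2 H3).
have Hq := leNI_trans H2 H3.
have := pre_c (path_cc Hx H1 H2 H3); by rewrite path_deg.
Qed.

Lemma ext_lmin y a b : is_path y -> ext y a -> ext y b -> exists ab, Lmin a b ab.
Proof.
move=> Hy [Ha Ea] [Hb Eb].
set t := joinN (kd a) (kd b).
have Ht : leNI t (pd y) by exact: leNI_join.
have H1 := path_comp Hy (le0N _) (leN_joinl (kd a) (kd b)) Ht.
have H2 := path_comp Hy (le0N _) (leN_joinr (kd a) (kd b)) Ht.
rewrite Ea in H1; rewrite Eb in H2.
apply: (common_lmin (c := pm y (kd a) t) (d := pm y (kd b) t)).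
- by rewrite -{1}Ea (path_cc Hy (le0N _) (leN_joinl _ _) Ht).
- by rewrite -{1}Eb (path_cc Hy (le0N _) (leN_joinr _ _) Ht).
- by rewrite -H1 -H2.
Qed.

Lemma cat_boundary lam z : finitely_aligned L -> is_boundary z -> ks lam = prange z ->
  is_boundary (cat lam z).
Proof.
move=> FA [Hz Bz] Hlz.
set y := cat lam z.
have Hy : is_path y := cat_path Hz Hlz.
have Hsh : peq (shift (kd lam) y) z := concat_shift Hz Hy (cat_concat Hz Hlz).
have Hdy : pd y = addNI (kd lam) (pd z) by [].
have Hlam : leNI (kd lam) (pd y).
  rewrite Hdy; apply/leNIP => i; rewrite ffunE; case: (pd z i) => //= a; lia.
have Yz : forall p q, leN p q -> leNI q (pd z) ->
    pm y (addN p (kd lam)) (addN q (kd lam)) = pm z p q.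
  move=> p q Hpq Hq; case: Hsh => Hd1 Hm; apply: (Hm p q Hpq); by rewrite Hd1.
have Yd : forall q, leNI q (pd z) -> leNI (addN q (kd lam)) (pd y).
  move=> q Hq; rewrite -leNI_shift //; case: Hsh => /= Hd1 _; by rewrite Hd1.
split => // n Hn E [HE1 HE2].
set t := joinN n (kd lam).
have Ht : leNI t (pd y) by exact: leNI_join.
set u := subN t (kd lam).
have Etu : addN u (kd lam) = t by rewrite addNC subNK // leN_joinr.
have Hu : leNI u (pd z).
  move: Ht; rewrite Hdy; move/leNIP => H; apply/leNIP => i; have := H i.
  rewrite !ffunE; case: (pd z i) => //= a; lia.
have Hnt : leN n t by exact: leN_joinl.
set rho := pm y n t.
have Hrho_r : kr rho = pm y n n by rewrite path_r.
have Hrho_s : ks rho = pm z u u by rewrite path_s // -Etu Yz ?leNn.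
set Ext := cfilter (fun be => exists l' al, List.In l' E /\ Lmin l' rho (al, be))
             (List.flat_map (fun l' => List.map snd (fa l' rho)) E).
have HExt : finite_exhaustive (pm z u u) Ext.
  split.
  - move=> be /in_cfilter [_ [l' [al [_ [_ H2 _ _]]]]]; by rewrite -H2.
  - move=> ga Hga.
    have Hc : ks rho = kr ga by rewrite Hrho_s.
    have Hrg : kr (kc rho ga) = pm y n n by rewrite kg_comp_r.
    have [l' [Hl' [[al bb] Hmin]]] := HE2 (kc rho ga) Hrg.
    case: (Hmin) => Hm1 Hm2 Hm3 Hm4.
    rewrite kg_comp_s // in Hm2.
    have E3 : kc l' al = kc rho (kc ga bb) by rewrite Hm3 kg_assoc.
    have Hrg2 : ks rho = kr (kc ga bb) by rewrite kg_comp_r.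
    have [c1 [d1 [e [Hcd He Ede]]]] := common_lmin2 Hm1 Hrg2 E3.
    exists d1; split.
    + apply/in_cfilter; split; last by exists l', c1.
      apply/List.in_flat_map; exists l'; split => //.
      apply/List.in_map_iff; exists (c1, d1); split => //; exact: fa_spec.
    + apply: (common_lmin (c := e) (d := bb)) => //; by rewrite -Ede.
have [be [HbeE [Hube Ebe]]] := Bz u Hu _ HExt.
case/in_cfilter: HbeE => _ [l' [al [Hl' Hmin]]].
have [Hd1 Hd2] := lmin_deg Hmin.
case: Hmin => Hm1 Hm2 Hm3 Hm4.
exists l'; split => //.
(* y(n, t + d be) = rho be = l' al *)
set r := addN t (kd be).
have Er : addN (addN u (kd be)) (kd lam) = r by rewrite /r -Etu -!addNA (addNC (kd be)).
have Hr : leNI r (pd y) by rewrite -Er; exact: Yd.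
have Htr : leN t r by exact: leN_addr.
have Ey : pm y n r = kc l' al.
  rewrite (path_comp Hy Hnt Htr Hr) -/rho Hm3; congr kc.
  by rewrite -Etu -Er Yz // leN_addr.
have Hdrho : kd rho = subN t n by rewrite path_deg.
have Hq : leN (addN n (kd l')) r.
  apply/leNP => i.
  have := eqN_at Hd1 i; have := eqN_at Hd2 i; have := eqN_at Hdrho i.
  move/leNP: Hnt => /(_ i).
  rewrite /r !ffunE; lia.
have Hnq : leN n (addN n (kd l')) by exact: leN_addr.
split; first exact: leNI_trans Hq Hr.
rewrite -(path_pre_gen Hy Hnq Hq Hr) Ey addNKl pre_c //.
Qed.

End Bdry.

Section Exist.
Variables (k : nat) (L : kgraph k).
Implicit Types (a b c l w lam : L) (m n p q r : Nk k) (x y z : kpath L).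


Definition RT := ({ffun 'I_k -> nat} * seq nat)%type.

Definition req (j : nat) : option RT := unpickle (Cantor.of_nat j).1.

Lemma req_inf (t : RT) (N : nat) : exists j, N <= j /\ req j = Some t.
Proof.
exists (Cantor.to_nat (pickle t, N)); split.
- have := Cantor.to_nat_non_decreasing (pickle t) N => /leP; lia.
- by rewrite /req Cantor.cancel_of_to /= pickleK.
Qed.

Lemma bounded_max (a : nat -> nat) B : (forall j, a j <= B) -> exists J, forall j, a j <= a J.
Proof.
elim: B => [|B IH] H.
- exists 0 => j; have := H j; lia.
- case: (classic (exists j, a j = B.+1)) => [[J HJ]|Hn].
  + exists J => j; rewrite HJ; exact: H.
  + apply: IH => j; have := H j; rewrite leq_eqVlt => /orP [/eqP E|//].
    exfalso; apply: Hn; by exists j.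
Qed.

Section Chain.
Variable v : L.
Hypothesis Hv : kd v = zeroN k.

Definition cenc : L -> nat := fun l =>
  epsilon (inhabits (fun _ : L => 0%N)) (fun f : L -> nat => injective f) l.
Lemma cenc_inj : injective cenc.
Proof.
rewrite /cenc.
match goal with |- context [epsilon ?i ?P] => suff: exists t0, P t0 by move/(epsilon_spec i) end.
exact: kg_countable.
Qed.
Definition dec (c : nat) : L := epsilon (inhabits v) (fun l => cenc l = c).
Lemma decK l : dec (cenc l) = l.
Proof.
apply: cenc_inj; rewrite /dec.
match goal with |- context [epsilon ?i ?P] => suff: exists t0, P t0 by move/(epsilon_spec i) end.
by exists l.
Qed.
Lemma map_decK (E : seq L) : map dec (map cenc E) = E.
Proof. elim: E => //= a E ->; by rewrite decK. Qed.

Definition choose_beta l n (E : seq L) : L :=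
  epsilon (inhabits l) (fun be => exists l' al, List.In l' E /\ Lmin l' (suf l n) (al, be)).

Definition step (j : nat) (l : L) : L :=
  match req j with
  | Some (n, codes) =>
      if leN n (kd l) then
        if excluded_middle_informative (finite_exhaustive (seg l n n) (map dec codes))
        then kc l (choose_beta l n (map dec codes)) else l
      else l
  | None => l
  end.

Fixpoint lamj (j : nat) : L := if j is j'.+1 then step j' (lamj j') else v.

Lemma beta_spec l n (E : seq L) : leN n (kd l) -> finite_exhaustive (seg l n n) E ->
  exists l' al, List.In l' E /\ Lmin l' (suf l n) (al, choose_beta l n E).
Proof.
move=> Hn [_ HE2].
rewrite /choose_beta.
match goal with |- context [epsilon ?i ?P] => suff: exists t0, P t0 by move/(epsilon_spec i) end.
have Hr : kr (suf l n) = seg l n n.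
  by rewrite -pre_suf_c // /seg suf_fullE // pre_deg.
have [l' [Hl' [[al be] Hm]]] := HE2 _ Hr.
by exists be, l', al.
Qed.

Lemma step_ext j l : exists be, ks l = kr be /\ step j l = kc l be.
Proof.
rewrite /step; case: (req j) => [[n codes]|]; last by exists (ks l); rewrite kr_ks kg_id_r.
case: ifP => Hn; last by exists (ks l); rewrite kr_ks kg_id_r.
case: excluded_middle_informative => HF; last by exists (ks l); rewrite kr_ks kg_id_r.
exists (choose_beta l n (map dec codes)); split => //.
have [l' [al [_ [_ H2 _ _]]]] := beta_spec Hn HF.
by rewrite -H2 ks_suf.
Qed.

Lemma lamj_r j : kr (lamj j) = v.
Proof.
elim: j => [|j IH] /=; first by case: (deg0 Hv).
have [be [Hb ->]] := step_ext j (lamj j); by rewrite kg_comp_r.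
Qed.

Lemma lamj_mono i j : i <= j ->
  leN (kd (lamj i)) (kd (lamj j)) /\ pre (lamj j) (kd (lamj i)) = lamj i.
Proof.
elim: j => [|j IH] Hij.
- have -> : i = 0 by lia. by rewrite leNn pre_full.
- case: (ltngtP i j.+1) => Hc; [|lia|].
  + have [H1 H2] := IH (ltnSE Hc).
    rewrite /=; have [be [Hb ->]] := step_ext j (lamj j).
    split; first by exact: leN_trans H1 (le_comp Hb).
    by rewrite pre_comp_l.
  + by rewrite Hc leNn pre_full.
Qed.

Lemma lamj_step j n codes : req j = Some (n, codes) -> leN n (kd (lamj j)) ->
  finite_exhaustive (seg (lamj j) n n) (map dec codes) ->
  exists l', [/\ List.In l' (map dec codes),
    leN (addN n (kd l')) (kd (lamj j.+1)) & seg (lamj j.+1) n (addN n (kd l')) = l'].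
Proof.
move=> Hreq Hn HF.
have E1 : lamj j.+1 = kc (lamj j) (choose_beta (lamj j) n (map dec codes)).
  rewrite /= /step Hreq Hn; by case: excluded_middle_informative.
set l := lamj j in Hn HF E1 *.
have [l' [al [Hl' Hm]]] := beta_spec Hn HF.
move: Hm E1; set be := choose_beta l n (map dec codes) => Hm E1.
have /leNP Hn' := Hn.
have [Hd1 Hd2] := lmin_deg Hm.
case: Hm => Hm1 Hm2 Hm3 Hm4.
have Hb : ks l = kr be by rewrite -Hm2 ks_suf.
exists l'; rewrite E1.
have Hle : leN (addN n (kd l')) (kd (kc l be)).
  rewrite deg_comp //; apply/leNP => i.
  have := eqN_at Hd1 i; have := eqN_at Hd2 i; have := eqN_at (suf_deg Hn) i.
  have := Hn' i; rewrite !ffunE; lia.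
split => //.
rewrite seg_pre //; last exact: leN_addr.
rewrite suf_comp // -Hm3 addNKl pre_c //.
Qed.

Definition aij (i : 'I_k) (j : nat) : nat := kd (lamj j) i.

Lemma aij_mono i j j' : j <= j' -> aij i j <= aij i j'.
Proof. move=> H; have [/leNP H1 _] := lamj_mono H; exact: H1. Qed.

Definition Jmax (i : 'I_k) : nat := epsilon (inhabits 0%N) (fun J => forall j, aij i j <= aij i J).

Definition Dinf : Ninf k := [ffun i =>
  if excluded_middle_informative (exists B, forall j, aij i j <= B)
  then Some (aij i (Jmax i)) else None].

Lemma Jmax_spec i : (exists B, forall j, aij i j <= B) -> forall j, aij i j <= aij i (Jmax i).
Proof.
case=> B HB; rewrite /Jmax.
match goal with |- context [epsilon ?i ?P] => suff: exists t0, P t0 by move/(epsilon_spec i) end.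
exact: (bounded_max HB).
Qed.

Lemma Dinf_le q : leNI q Dinf <-> exists j, leN q (kd (lamj j)).
Proof.
split.
- move/leNIP => H.
  have Hi : forall i, exists j, q i <= aij i j.
    move=> i; have := H i; rewrite ffunE; case: excluded_middle_informative => Hb /=.
    + by exists (Jmax i).
    + move=> _; apply: NNPP => Hn; apply: Hb; exists (q i) => j.
      case: (leqP (aij i j) (q i)) => // Hlt; exfalso; apply: Hn; exists j; lia.
  pose ji i := epsilon (inhabits 0%N) (fun j => q i <= aij i j).
  have Hji : forall i, q i <= aij i (ji i).
    move=> i; rewrite /ji.
    match goal with |- context [epsilon ?i ?P] => suff: exists t0, P t0 by move/(epsilon_spec i) end.
    exact: Hi.
  exists (\max_(i < k) ji i); apply/leNP => i.
  apply: (leq_trans (Hji i)); apply: aij_mono; exact: (leq_bigmax_cond i).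
- case=> j /leNP Hj; apply/leNIP => i; rewrite ffunE.
  case: excluded_middle_informative => Hb //=.
  exact: leq_trans (Hj i) (Jmax_spec Hb j).
Qed.

Definition jn n : nat := epsilon (inhabits 0%N) (fun j => leN n (kd (lamj j))).
Lemma jn_spec n : leNI n Dinf -> leN n (kd (lamj (jn n))).
Proof.
move/Dinf_le => H; rewrite /jn.
match goal with |- context [epsilon ?i ?P] => suff: exists t0, P t0 by move/(epsilon_spec i) end.
exact: H.
Qed.

Lemma chain_pre_indep n j1 j2 : leN n (kd (lamj j1)) -> leN n (kd (lamj j2)) ->
  pre (lamj j1) n = pre (lamj j2) n.
Proof.
wlog H12 : j1 j2 / j1 <= j2 => [Hw H1 H2|H1 H2].
  case: (leqP j1 j2) => Hc; [exact: Hw|]; symmetry; apply: Hw => //; lia.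
have [Hm Hp] := lamj_mono H12.
by rewrite -{1}Hp pre_pre.
Qed.

Definition Pn n := pre (lamj (jn n)) n.

Lemma Pn_deg n : leNI n Dinf -> kd (Pn n) = n.
Proof. move=> H; by rewrite /Pn pre_deg // jn_spec. Qed.

Lemma Pn_pre n m : leN n m -> leNI m Dinf -> pre (Pn m) n = Pn n.
Proof.
move=> Hnm Hm.
have Hn := leNI_trans Hnm Hm.
rewrite /Pn pre_pre ?jn_spec //.
apply: chain_pre_indep; [exact: leN_trans Hnm (jn_spec Hm)|exact: jn_spec].
Qed.

Definition xlim := mkpath Pn Dinf.

Lemma xlim_path : is_path xlim.
Proof. apply: mkpath_path; [exact: Pn_deg|exact: Pn_pre]. Qed.

Lemma xlim_seg j p q : leN p q -> leN q (kd (lamj j)) -> pm xlim p q = seg (lamj j) p q.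
Proof.
move=> Hpq Hq.
have Hq' : leNI q Dinf by apply/Dinf_le; exists j.
rewrite /= /seg (pre_fullE (Pn_deg Hq')) /Pn.
rewrite (chain_pre_indep (jn_spec Hq') Hq) //.
Qed.

Lemma xlim_range : prange xlim = v.
Proof.
rewrite /prange (xlim_seg (j := 0)) ?leNn ?le0N //= seg0 pre0.
by case: (deg0 Hv).
Qed.

Lemma xlim_boundary : is_boundary xlim.
Proof.
split; first exact: xlim_path.
move=> n Hn E HE.
have [J HJ] := (Dinf_le n).1 Hn.
have [j [HJj Hreq]] := req_inf (n, map cenc E) J.
have Hnj : leN n (kd (lamj j)) by exact: leN_trans HJ (proj1 (lamj_mono HJj)).
have HF : finite_exhaustive (seg (lamj j) n n) (map dec (map cenc E)).
  by rewrite map_decK -(xlim_seg (leNn n) Hnj).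
have [l' [Hl' Hle Hseg]] := lamj_step Hreq Hnj HF.
rewrite map_decK in Hl'.
exists l'; split => //; split.
- by apply/Dinf_le; exists j.+1.
- by rewrite (xlim_seg (j := j.+1)) // leN_addr.
Qed.

End Chain.

Lemma boundary_exists v : kd v = zeroN k -> exists x, is_boundary x /\ prange x = v.
Proof. move=> Hv; exists (xlim v); split; [exact: xlim_boundary|exact: xlim_range]. Qed.

End Exist.

Local Notation idempotent := Defs.idempotent.

Section Main.
Variables (k : nat) (L : kgraph k).
Implicit Types (a b c l w lam : L) (m n p q r : Nk k) (x y z : kpath L).

Definition single (ab : L * L) : pairset L := fun cd => cd = ab.

Lemma inS_single a b : ks a = ks b -> inS (single (a, b)).
Proof.
move=> H; split.
- exists [:: (a, b)] => ab ->; by left.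
- by move=> l m [-> ->].
- by move=> l m n' o -> -> [].
Qed.

Lemma joinNn m : joinN m m = m.
Proof. apply: eqNP => i; rewrite ffunE; lia. Qed.

Lemma idem_single a : idempotent (single (a, a)).
Proof.
split; first exact: inS_single.
move=> ab; split.
- case=> [l [m [xi [eta [a1 [b1 [H1 H2 Hm ->]]]]]]].
  case: H1 => E1 E2; case: H2 => E3 E4; subst.
  case: Hm => Hm1 Hm2 Hm3 Hm4.
  rewrite joinNn in Hm4.
  have Ha1 : kd a1 = zeroN k by apply: (addN_eq0 (m := kd a)); rewrite -deg_comp.
  have E1 : kc a a1 = a by exact: comp_deg0.
  by rewrite /single -Hm3 E1.
- move=> ->; exists a, a, a, a, (ks a), (ks a); split => //.
  + split => //; [by rewrite kr_ks|by rewrite kr_ks|by rewrite kg_id_r joinNn].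
  + by rewrite kg_id_r.
Qed.

Lemma idem_diag (P : pairset L) a b : idempotent P -> P (a, b) -> a = b.
Proof.
move=> [[_ Hsrc Hdisj] HPP] Hab.
have [lam [mu [xi [eta [a1 [b1 [H1 H2 Hm E]]]]]]] := (HPP (a, b)).2 Hab.
case: E => Ea Eb.
case: (Hm) => Hm1 Hm2 Hm3 Hm4.
have Hla : ks lam = kr a1 by rewrite (Hsrc _ _ H1).
have Heb : ks eta = kr b1 by rewrite -(Hsrc _ _ H2).
have E1 : (lam, mu) = (a, b).
  apply: NNPP => Hne; have [Hd _] := Hdisj _ _ _ _ H1 Hab Hne.
  have Hc : kc lam a1 = kc a (ks a) by rewrite kg_id_r Ea.
  have [ab Hab'] := common_lmin Hla (esym (kr_ks a)) Hc.
  exact: Hd ab Hab'.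
have E2 : (xi, eta) = (a, b).
  apply: NNPP => Hne; have [_ Hd] := Hdisj _ _ _ _ H2 Hab Hne.
  have Hc : kc eta b1 = kc b (ks b) by rewrite kg_id_r Eb.
  have [ab Hab'] := common_lmin Heb (esym (kr_ks b)) Hc.
  exact: Hd ab Hab'.
case: E1 => El Em; case: E2 => Ex Ee.
subst lam mu xi eta.
have Ha1 : kd a1 = zeroN k by apply: comp_self Hla (esym Ea).
have Hb1 : kd b1 = zeroN k by apply: comp_self Heb (esym Eb).
by rewrite -(comp_deg0 Hm1 Ha1) Hm3 (comp_deg0 Hm2 Hb1).
Qed.

Lemma prodS_diag (P Q : pairset L) a b : idempotent P -> idempotent Q ->
  prodS P Q (a, b) -> a = b.
Proof.
move=> HP HQ [lam [mu [xi [eta [a1 [b1 [H1 H2 Hm E]]]]]]].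
case: E => -> ->.
rewrite (idem_diag HP H1) -(idem_diag HQ H2).
by case: Hm.
Qed.

Definition aperiodic x := forall m n, leNI m (pd x) -> leNI n (pd x) ->
  peq (shift m x) (shift n x) -> m = n.

Lemma aper_trivial y : is_path y -> aperiodic y -> trivial_isotropy y.
Proof.
move=> Hy Ay F HS HD [lam [mu [HF Hmu Emu Hc]]].
have Hz : is_path (shift (kd mu) y) by exact: shift_path.
have [Hl El] := concat_ext Hz Hc.
have Hsh := concat_shift Hz Hy Hc.
have Hpq : peq (shift (kd lam) y) (shift (kd mu) y) by [].
have Ed := Ay _ _ Hl Hmu Hpq.
have Elm : lam = mu by rewrite -El Ed Emu.
subst lam.
exists (single (mu, mu)); split.
- exact: idem_single.
- by exists mu, mu.
- split; first exact: peq_refl.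
  exists (single (mu, mu)); split.
  + exact: idem_single.
  + by exists mu, mu.
  + move=> ab; split.
    * case=> [l1 [m1 [xi [eta [a1 [b1 [H1 H2 Hm E]]]]]]].
      case: H2 => Hx He; subst xi eta.
      have E1 : (l1, m1) = (mu, mu).
        apply: NNPP => Hne.
        case: HS => _ _ Hdisj.
        have [_ Hd] := Hdisj _ _ _ _ H1 HF Hne.
        exact: Hd _ Hm.
      case: E1 => E1 E2; subst l1 m1.
      by exists mu, mu, mu, mu, a1, b1.
    * case=> [l1 [m1 [xi [eta [a1 [b1 [H1 H2 Hm E]]]]]]].
      case: H1 => Hx He; subst l1 m1.
      by exists mu, mu, xi, eta, a1, b1.
Qed.

End Main.

Section Main2.
Variables (k : nat) (L : kgraph k).
Implicit Types (a b c l w lam : L) (m n p q r : Nk k) (x y z : kpath L).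

Lemma aper_cat rho x' : is_path x' -> ks rho = prange x' -> aperiodic x' ->
  aperiodic (cat rho x').
Proof.
move=> Hx Hr Ax m n Hm Hn Hpq.
have Hy : is_path (cat rho x') := cat_path Hx Hr.
have Hsh : peq (shift (kd rho) (cat rho x')) x' := concat_shift Hx Hy (cat_concat Hx Hr).
have Hpd : pd (cat rho x') = addNI (kd rho) (pd x') by [].
have /leNIP Hm' := Hm; have /leNIP Hn' := Hn.
have Hfin : forall i (u : nat), pd x' i = Some u -> m i = n i.
  move=> i u Ea; have := congr1 (fun f : Ninf k => f i) (proj1 Hpq); have := Hm' i; have := Hn' i.
  rewrite /= !ffunE Ea /= => H1 H2 [E]; lia.
pose s : Nk k := [ffun i => kd rho i - minn (m i) (n i)].
have Hs1 : leNI (addN s m) (pd (cat rho x')).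
  apply/leNIP => i; have := Hm' i; have := Hn' i; rewrite /= !ffunE.
  case E: (pd x' i) => [u|] //=; have := Hfin i u E; lia.
have Hs2 : leNI (addN s n) (pd (cat rho x')).
  apply/leNIP => i; have := Hm' i; have := Hn' i; rewrite /= !ffunE.
  case E: (pd x' i) => [u|] //=; have := Hfin i u E; lia.
have P1 : peq (shift (addN s m) (cat rho x')) (shift (addN s n) (cat rho x')).
  have Hsm : leNI s (pd (shift m (cat rho x'))) by rewrite /= leNI_shift.
  have H1 := peq_shift Hsm Hpq.
  apply: peq_trans (peq_sym (shift_shift (cat rho x') s m)) _.
  exact: peq_trans H1 (shift_shift (cat rho x') s n).
pose m' := subN (addN s m) (kd rho).
pose n' := subN (addN s n) (kd rho).
have Em : addN m' (kd rho) = addN s m.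
  apply: eqNP => i; rewrite !ffunE; lia.
have En : addN n' (kd rho) = addN s n.
  apply: eqNP => i; rewrite !ffunE; lia.
have Hm2 : leNI m' (pd x').
  move/leNIP: Hs1 => H; apply/leNIP => i; have := H i; rewrite /= !ffunE.
  case: (pd x' i) => [u|] //=; lia.
have Hn2 : leNI n' (pd x').
  move/leNIP: Hs2 => H; apply/leNIP => i; have := H i; rewrite /= !ffunE.
  case: (pd x' i) => [u|] //=; lia.
have Q : forall t, leNI t (pd x') -> peq (shift t x') (shift (addN t (kd rho)) (cat rho x')).
  move=> t Ht; apply: peq_trans (shift_shift (cat rho x') t (kd rho)).
  apply: peq_shift (peq_sym Hsh) => //.
have Q1 := Q m' Hm2; have Q2 := Q n' Hn2.
rewrite Em in Q1; rewrite En in Q2.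
have Emn : m' = n'.
  apply: Ax => //; apply: peq_trans Q1 _; apply: peq_trans P1 (peq_sym Q2).
have : addN s m = addN s n by rewrite -Em -En Emn.
exact: addN_cancel_l.
Qed.

Definition slist (F : pairset L) : list (L * L) :=
  epsilon (inhabits nil) (fun s0 : list (L * L) => forall ab, F ab -> List.In ab s0).

Lemma slist_spec F ab : inS F -> F ab -> List.In ab (slist F).
Proof.
case=> HF _ _; move: ab; rewrite /slist.
match goal with |- context [epsilon ?i ?P] => suff: exists t0 : list (L * L), P t0 by move/(epsilon_spec i) end.
exact: HF.
Qed.

Lemma lmin_sym a b c d : Lmin a b (c, d) -> Lmin b a (d, c).
Proof.
case=> H1 H2 H3 H4; split => //; rewrite -H3 H4; apply: eqNP => i; rewrite !ffunE; lia.
Qed.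

Lemma join_witness x0 (Bs : list (pairset L * bool)) :
  (forall B, List.In B Bs -> B.2 = true -> inD B.1 x0) ->
  exists n, leNI n (pd x0) /\ forall B, List.In B Bs -> B.2 = true ->
    exists lam mu, [/\ B.1 (lam, mu), leN (kd mu) n & pm x0 (zeroN k) (kd mu) = mu].
Proof.
elim: Bs => [|B Bs IH] H.
- exists (zeroN k); split => //; exact: leNI0.
- have [n [Hn Hw]] := IH (fun B' HB' => H B' (or_intror HB')).
  case E: B.2.
  + have [lam [mu [H1 H2 H3]]] := H B (or_introl erefl) E.
    exists (joinN n (kd mu)); split; first exact: leNI_join.
    move=> B' [<-|HB'] E'.
    * exists lam, mu; split => //; exact: leN_joinr.
    * have [lam' [mu' [G1 G2 G3]]] := Hw B' HB' E'.
      exists lam', mu'; split => //; exact: leN_trans G2 (leN_joinl _ _).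
  + exists n; split => //.
    move=> B' [<-|HB'] E'; first by rewrite E in E'.
    exact: Hw.
Qed.

End Main2.

Theorem proposition7p2 (k : nat) (L : kgraph k) :
  finitely_aligned L ->
  (conditionA L <-> boundary_groupoid_essentially_free L).
Proof.
move=> FA; split.
-
  move=> CA U HU [x0 [Bx0 Ux0]].
  have Hx0 := proj1 Bx0.
  have [Bs [HBs [Hin Hsub]]] := HU x0 Hx0 Ux0.
  have Hpos : forall B, List.In B Bs -> B.2 = true -> inD B.1 x0.
    move=> B HB E; have := Hin B HB; by rewrite /in_subbasic E.
  have [n [Hn Hw]] := join_witness Hpos.
  set mu0 := pm x0 (zeroN k) n.
  have Hdmu0 : kd mu0 = n by exact: path_deg0.
  set E := cfilter (fun a => exists B l nu b, [/\ List.In B Bs, B.2 = false, B.1 (l, nu)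
                 & Lmin mu0 nu (a, b)])
           (List.flat_map (fun B => List.flat_map (fun ln => List.map fst (fa mu0 ln.2))
                  (slist B.1)) Bs).
  have inE : forall B l nu a b, List.In B Bs -> B.2 = false -> B.1 (l, nu) ->
      Lmin mu0 nu (a, b) -> List.In a E.
    move=> B l nu a b HB E2 HF Hm; apply/in_cfilter; split; last by exists B, l, nu, b.
    apply/List.in_flat_map; exists B; split => //.
    apply/List.in_flat_map; exists (l, nu); split; first exact: slist_spec (HBs B HB) HF.
    apply/List.in_map_iff; exists (a, b); split => //; exact: fa_spec.
  have Hs0 : ks mu0 = pm x0 n n by rewrite path_s // le0N.
  have [ga [Hga Hng]] : exists ga, kr ga = ks mu0 /\
      forall a, List.In a E -> forall ab, ~ Lmin a ga ab.
    apply: NNPP => Hne.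
    have HFE : finite_exhaustive (pm x0 n n) E.
      split.
      - move=> a /in_cfilter [_ [B [l [nu [b [_ _ _ [H1 _ _ _]]]]]]]; by rewrite -H1.
      - move=> mu' Hmu'; apply: NNPP => H2; apply: Hne; exists mu'; split; first by rewrite Hs0.
        move=> a Ha ab Hab; apply: H2; exists a; split => //; by exists ab.
    have [a [Ha [Hle Ea]]] := proj2 Bx0 n Hn E HFE.
    case/in_cfilter: Ha => _ [B [l [nu [b [HB E2 HF Hm]]]]].
    have [Hd1 _] := lmin_deg Hm.
    case: Hm => Hm1 Hm2 Hm3 Hm4.
    have Hnn : leN n (addN n (kd a)) by exact: leN_addr.
    have Ex : pm x0 (zeroN k) (addN n (kd a)) = kc nu b.
      by rewrite (path_comp Hx0 (le0N _) Hnn Hle) Ea -/mu0 Hm3.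
    have Hdnu : leN (kd nu) (addN n (kd a)).
      rewrite -Hdmu0 -deg_comp // Hm4; exact: leN_joinr.
    have : inD B.1 x0.
      exists l, nu; split => //; first exact: leNI_trans Hdnu Hle.
      by rewrite -(path_pre Hx0 Hdnu Hle) Ex pre_c.
    by have := Hin B HB; rewrite /in_subbasic E2.
  have [x' [Bx' Rx' Ax']] := CA (ks ga) (kd_ks ga).
  have Hx' := proj1 Bx'.
  have Hmg : ks mu0 = kr ga by rewrite Hga.
  set rho := kc mu0 ga.
  have Hr : ks rho = prange x' by rewrite kg_comp_s.
  set y := cat rho x'.
  have Hy : is_path y := cat_path Hx' Hr.
  have [Hrho Erho] : ext y rho := concat_ext Hx' (cat_concat Hx' Hr).
  have Hdrho : kd rho = addN n (kd ga) by rewrite deg_comp // Hdmu0.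
  exists y; split.
  + exact: cat_boundary.
  + apply: Hsub => // B HB; rewrite /in_subbasic; case E2: B.2.
    * have [lam [mu [H1 H2 H3]]] := Hw B HB E2.
      have Hmr : leN (kd mu) (kd rho) by rewrite Hdrho; exact: leN_trans H2 (leN_addr _ _).
      exists lam, mu; split => //; first exact: leNI_trans Hmr Hrho.
      rewrite -(path_pre Hy Hmr Hrho) Erho /rho pre_comp_l ?Hdmu0 //.
      by rewrite /mu0 path_pre.
    * move=> [l [nu [HF Hnu Enu]]].
      set t := joinN (kd rho) (kd nu).
      have Ht : leNI t (pd y) by exact: leNI_join.
      have H1 := path_comp Hy (le0N _) (leN_joinl (kd rho) (kd nu)) Ht.
      have H2 := path_comp Hy (le0N _) (leN_joinr (kd rho) (kd nu)) Ht.
      rewrite Erho in H1; rewrite Enu in H2.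
      set c := pm y (kd rho) t in H1.
      set d := pm y (kd nu) t in H2.
      have Hrc : ks rho = kr c.
        by rewrite -{1}Erho (path_cc Hy (le0N _) (leN_joinl _ _) Ht).
      have Hnd : ks nu = kr d.
        by rewrite -{1}Enu (path_cc Hy (le0N _) (leN_joinr _ _) Ht).
      have Hgc : ks ga = kr c by rewrite -Hrc kg_comp_s.
      have E3 : kc nu d = kc mu0 (kc ga c) by rewrite -kg_assoc // -/rho -H1 -H2.
      have Hmu0c : ks mu0 = kr (kc ga c) by rewrite kg_comp_r.
      have [c1 [d1 [e [Hm He Ede]]]] := common_lmin2 Hnd Hmu0c E3.
      have Hd1E : List.In d1 E := inE B l nu d1 c1 HB E2 HF (lmin_sym Hm).
      have [ab Hab] := common_lmin He Hgc (esym Ede).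
      exact: Hng d1 Hd1E ab Hab.
  + apply: aper_trivial => //; exact: aper_cat.
-
  move=> EF v Hv.
  have [Hvr Hvs] := deg0 Hv.
  set Pv := single (v, v).
  have HPv : inS Pv by exact: inS_single.
  have HU : is_open (inD Pv).
    move=> x Hx HUx; exists [:: (Pv, true)]; split; [|split].
    - by move=> B [<-|[]].
    - by move=> B [<-|[]].
    - move=> y' Hy' Hb; exact: (Hb _ (or_introl erefl)).
  have [x0 [Bx0 Rx0]] := boundary_exists Hv.
  have Ux0 : inD Pv x0.
    exists v, v; split => //; rewrite Hv; [exact: leNI0|exact: Rx0].
  have [x [Bx Ux Tx]] := EF _ HU (ex_intro _ x0 (conj Bx0 Ux0)).
  have Hx := proj1 Bx.
  exists x; split => //.
  + case: Ux => [l [mu [Hs Hle Emu]]]; case: Hs => _ E; subst mu.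
    by rewrite Hv in Emu.
  + move=> m n Hm Hn Hpq.
    set a0 := pm x (zeroN k) m; set b0 := pm x (zeroN k) n.
    have Hda : kd a0 = m by exact: path_deg0.
    have Hdb : kd b0 = n by exact: path_deg0.
    have Hmn : pm x m m = pm x n n.
      have := (proj2 Hpq) (zeroN k) (zeroN k) (leNn _) (leNI0 _); by rewrite /= !add0N.
    have Hsa : ks a0 = pm x m m by rewrite path_s // le0N.
    have Hsb : ks b0 = pm x n n by rewrite path_s // le0N.
    have Hs : ks a0 = ks b0 by rewrite Hsa Hsb Hmn.
    set F := single (a0, b0).
    have HS : inS F by exact: inS_single.
    have HD : inD F x by exists a0, b0; split => //; rewrite Hdb.
    have HT : theta_rel F x x.
      exists a0, b0; split => //; [by rewrite Hdb|by rewrite Hdb|].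
      rewrite Hdb; split.
      - by rewrite prange_shift Hsa Hmn.
      - have Hp1 : subIN (pd x) m = subIN (pd x) n := proj1 Hpq.
        rewrite Hda /= -Hp1; apply/ffunP => i; rewrite !ffunE.
        move/leNIP: Hm => /(_ i); case: (pd x i) => [c|] //= Hc; congr Some; lia.
      - move=> p Hp Hpx; rewrite Hda in Hp *.
        rewrite (path_comp Hx (le0N _) Hp Hpx) -/a0; congr kc.
        have Ep : addN (subN p m) m = p by rewrite addNC subNK.
        have Hpm : leNI (subN p m) (pd (shift m x)) by apply: leNI_shiftW; rewrite Ep.
        rewrite -((proj2 Hpq) _ _ (le0N _) Hpm) /= add0N Ep //.
    have [P [HP HDP [_ [P' [HP' [r1 [r2 [HP'r Hr Er]]] Heq]]]]] := Tx F HS HD HT.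
    have E12 := idem_diag HP' HP'r; subst r1.
    have Eb : ext x b0 by split; rewrite Hdb.
    have [[a1 b1] Hab] := ext_lmin Hx Eb (conj Hr Er).
    have Hpr : prodS F P' (kc a0 a1, kc r2 b1).
      by exists a0, b0, r2, r2, a1, b1.
    have Eq := prodS_diag HP HP' ((Heq _).1 Hpr).
    have [Hd1 Hd2] := lmin_deg Hab.
    case: Hab => Hm1 Hm2 Hm3 Hm4.
    have Hc : ks a0 = kr a1 by rewrite Hs.
    have := deg_comp Hc; rewrite Eq -Hm3 deg_comp // Hda Hdb.
    move/esym; exact: addN_cancel_r.
Qed.
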